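(* Let $\mathcal{H}$ be a complex Hilbert space and $A,B\in\mathcal{B}(\mathcal{H})$. Then for every non-negative non-decreasing convex function $h$ on $[0,\infty)$, \[ h\big(\omega(A^{*}B)\big) \leq \frac{1}{2} h\big(\|A\|\,\|B\|\big) + \frac{1}{2} h\big(\omega(BA^{*})\big). \]
   Context: $\omega(T)=\sup\{|\langle Tx,x\rangle|:x\in\mathcal{H},\|x\|=1\}$ denotes the numerical radius and $\|\cdot\|$ the operator norm. *)

(* Defs.v *)
From HB Require Import structures.
From mathcomp Require Import all_boot all_order all_algebra.
From mathcomp Require Import complex.
From mathcomp Require Import boolp classical_sets reals.
Set Implicit Arguments. Unset Strict Implicit. Unset Printing Implicit Defensive.
Import Order.TTheory GRing.Theory Num.Theory.
Local Open Scope ring_scope.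
Local Open Scope classical_set_scope.

Section Hilbert.
Variables (R : realType) (H : lmodType R[i]) (ip : H -> H -> R[i]).

Definition hnorm (x : H) : R := Num.sqrt (complex.Re (ip x x)).

Definition is_inner_product : Prop :=
  [/\ (forall (a : R[i]) (x y z : H), ip (a *: x + y) z = a * ip x z + ip y z),
      (forall x y : H, ip x y = (ip y x)^*),
      (forall x : H, 0 <= ip x x) &
      (forall x : H, ip x x = 0 -> x = 0)].

Definition hcomplete : Prop :=
  forall u : nat -> H,
    (forall e : R, 0 < e -> exists N : nat, forall m n : nat,
        (N <= m)%N -> (N <= n)%N -> hnorm (u m - u n) < e) ->
    exists l : H, forall e : R, 0 < e -> exists N : nat, forall n : nat,
        (N <= n)%N -> hnorm (u n - l) < e.

Definition is_hilbert : Prop := is_inner_product /\ hcomplete.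

Definition bounded_op (T : H -> H) : Prop :=
  linear T /\ exists M : R, forall x : H, hnorm (T x) <= M * hnorm x.

Definition is_adjoint (T Ts : H -> H) : Prop :=
  forall x y : H, ip (T x) y = ip x (Ts y).

Definition opnorm (T : H -> H) : R :=
  sup [set r : R | exists x : H, hnorm x = 1 /\ r = hnorm (T x)].

Definition numrad (T : H -> H) : R :=
  sup [set r : R | exists x : H, hnorm x = 1 /\ r = complex.Re `|ip (T x) x|].

End Hilbert.

Definition nonneg_nondecr_convex_on_nonneg (R : realType) (h : R -> R) : Prop :=
  [/\ (forall x : R, 0 <= x -> 0 <= h x),
      (forall x y : R, 0 <= x -> x <= y -> h x <= h y) &
      (forall (x y t : R), 0 <= x -> 0 <= y -> 0 <= t -> t <= 1 ->
          h (t * x + (1 - t) * y) <= t * h x + (1 - t) * h y)].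

(* Main.v *)
Require Import Defs.
From HB Require Import structures.
From mathcomp Require Import all_boot all_order all_algebra.
From mathcomp Require Import complex.
From mathcomp Require Import boolp classical_sets reals.
From mathcomp Require Import ring lra.
Import Order.TTheory GRing.Theory Num.Theory.
Local Open Scope ring_scope.

Section IP.
Variables (R : realType) (H : lmodType R[i]) (ip : H -> H -> R[i]).
Hypothesis Hip : is_inner_product ip.
Local Notation nm := (hnorm ip).

Lemma ipDZl a x y z : ip (a *: x + y) z = a * ip x z + ip y z.
Proof. by case: Hip. Qed.
Lemma ipC x y : ip x y = (ip y x)^*.
Proof. by case: Hip. Qed.
Lemma ipxx_ge0 x : 0 <= ip x x.
Proof. by case: Hip. Qed.
Lemma ipxx_eq0 x : ip x x = 0 -> x = 0.
Proof. by case: Hip => _ _ _; apply. Qed.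
Lemma ip0l z : ip 0 z = 0.
Proof.
have := ipDZl 1 0 0 z; rewrite scale1r addr0 mul1r.
by move/(congr1 (fun t => t - ip 0 z)); rewrite subrr addrK => <-.
Qed.
Lemma ipDl x y z : ip (x + y) z = ip x z + ip y z.
Proof. by have := ipDZl 1 x y z; rewrite scale1r mul1r. Qed.
Lemma ipZl a x z : ip (a *: x) z = a * ip x z.
Proof. by have := ipDZl a x 0 z; rewrite addr0 ip0l addr0. Qed.
Lemma ipNl x z : ip (- x) z = - ip x z.
Proof. by rewrite -scaleN1r ipZl mulN1r. Qed.
Lemma ipBl x y z : ip (x - y) z = ip x z - ip y z.
Proof. by rewrite ipDl ipNl. Qed.
Lemma ipZr x a y : ip x (a *: y) = a^* * ip x y.
Proof. by rewrite ipC ipZl rmorphM /= -ipC. Qed.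
Lemma ipDr x y z : ip x (y + z) = ip x y + ip x z.
Proof. by rewrite ipC ipDl rmorphD /= -!ipC. Qed.
Lemma ip0r x : ip x 0 = 0.
Proof. by rewrite ipC ip0l rmorph0. Qed.
Lemma ipNr x z : ip x (- z) = - ip x z.
Proof. by rewrite ipC ipNl rmorphN /= -ipC. Qed.
Lemma ipBr x y z : ip x (y - z) = ip x y - ip x z.
Proof. by rewrite ipDr ipNr. Qed.

Lemma ipxx_real x : ip x x = ((nm x)^+2)%:C%C.
Proof.
have h0 := ipxx_ge0 x.
have hr : (complex.Re (ip x x))%:C%C = ip x x := RRe_real (ger0_real h0).
have hR : 0 <= complex.Re (ip x x) by rewrite -ler0c hr.
by rewrite /hnorm sqr_sqrtr.
Qed.
Lemma nm_ge0 x : 0 <= nm x.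
Proof. exact: sqrtr_ge0. Qed.
Lemma nmC x : ((nm x)%:C%C) ^+ 2 = ip x x.
Proof. by rewrite ipxx_real rmorphXn. Qed.
Lemma nm_eq0 x : nm x = 0 -> x = 0.
Proof. by move=> e; apply: ipxx_eq0; rewrite ipxx_real e expr0n. Qed.
Lemma nm0 : nm 0 = 0.
Proof. by rewrite /hnorm ip0l /= sqrtr0. Qed.

Lemma CS x y : `|ip x y| <= ((nm x * nm y)%:C)%C.
Proof.
have [->|y0] := eqVneq y 0.
  by rewrite ip0r normr0 ler0c mulr_ge0 ?nm_ge0.
set p := ip x y; set r := ip y y.
have r0 : r != 0 by apply/eqP => /ipxx_eq0 /eqP; rewrite (negbTE y0).
have rR : r^* = r := conj_Creal (ger0_real (ipxx_ge0 y)).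
have key := ipxx_ge0 (x - (p / r) *: y).
rewrite ipBl !ipBr !ipZl !ipZr -/p -/r (ipC y x) -/p fmorph_div /= rR in key.
have key2 : 0 <= (ip x x - (p^* / r * p) - ((p / r) * p^* - (p / r) * ((p^* / r) * r))) * r.
  by rewrite mulr_ge0 //; exact: ipxx_ge0.
have E : (ip x x - (p^* / r * p) - ((p / r) * p^* - (p / r) * ((p^* / r) * r))) * r
   = ip x x * r - p * p^* by field.
rewrite E subr_ge0 -normCK /r -!nmC -exprMn -rmorphM in key2.
rewrite -(ler_pXn2r (_ : 0 < 2)%N) ?nnegrE ?normr_ge0 ?ler0c ?mulr_ge0 ?nm_ge0 //.
Qed.

Lemma nmZr (c : R) x : 0 <= c -> nm ((c%:C)%C *: x) = c * nm x.
Proof.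
move=> c0; apply/eqP; rewrite -(eqrXn2 (_ : 0 < 2)%N) ?mulr_ge0 ?nm_ge0 //.
apply/eqP; apply: complexI; rewrite -ipxx_real ipZl ipZr.
have cr : ((c%:C)%C : R[i]) \is Num.real by apply: ger0_real; rewrite ler0c.
rewrite (conj_Creal cr) ipxx_real !(rmorphM, rmorphXn) /=; ring.
Qed.

Lemma nm_gt0 z : z != 0 -> 0 < nm z.
Proof.
move=> z0; rewrite lt_def nm_ge0 andbT; apply/eqP => /nm_eq0 /eqP.
by rewrite (negbTE z0).
Qed.

Lemma nm_unit z : z != 0 -> nm (((nm z)^-1)%:C%C *: z) = 1.
Proof.
move=> z0; rewrite nmZr ?invr_ge0 ?nm_ge0 // mulVf //.
by rewrite gt_eqF // nm_gt0.
Qed.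

Lemma sup_ge0' (S : set R) : (forall r, S r -> 0 <= r) -> 0 <= sup S.
Proof.
move=> hS; have [hs|nhs] := pselect (has_sup S); last by rewrite sup_out.
case: (hs) => [[r Sr] _]; apply: le_trans (hS r Sr) _.
exact: sup_upper_bound.
Qed.

Lemma sup_le_ub' (S : set R) m : 0 <= m -> (forall r, S r -> r <= m) -> sup S <= m.
Proof.
move=> m0 hS; have [ne|ne] := pselect (S !=set0)%classic.
  by apply: ge_sup.
rewrite (_ : S = set0) ?sup0 //; apply/seteqP; split=> x // Sx.
by exfalso; apply: ne; exists x.
Qed.

Section Lin.
Variable T : H -> H.
Hypothesis lin : linear T.
Lemma T0 : T 0 = 0.
Proof. by have := lin (-1) 0 0; rewrite scaler0 addr0 scaleN1r addNr. Qed.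
Lemma TZ a u : T (a *: u) = a *: T u.
Proof. by have := lin a u 0; rewrite !addr0 T0 addr0. Qed.
Lemma TD u v : T (u + v) = T u + T v.
Proof. by have := lin 1 u v; rewrite !scale1r. Qed.
End Lin.

Lemma opnorm_ge0 T : 0 <= opnorm ip T.
Proof. by apply: sup_ge0' => r [x [_ ->]]; apply: nm_ge0. Qed.

Lemma op_bound T : bounded_op ip T -> forall z, nm (T z) <= opnorm ip T * nm z.
Proof.
case=> lin [M hM] z.
have [->|z0] := eqVneq z 0; first by rewrite (T0 _ lin) nm0 mulr0.
set c := (nm z)^-1.
have nu := nm_unit z z0.
have Hs : nm (T ((c%:C)%C *: z)) <= opnorm ip T.
  apply: ub_le_sup; last by exists ((c%:C)%C *: z).
  exists M => r [x [nx ->]]; by rewrite (le_trans (hM x)) // nx mulr1.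
rewrite (TZ _ lin) nmZr ?invr_ge0 ?nm_ge0 // mulrC in Hs.
by rewrite -ler_pdivrMr ?nm_gt0.
Qed.

Lemma ReN (z : R[i]) t : (complex.Re `|z| <= t) = (`|z| <= (t%:C)%C).
Proof. by rewrite -lecR RRe_real // normr_real. Qed.

Lemma conjR (t : R) : ((t%:C)%C : R[i])^* = (t%:C)%C.
Proof. by apply: conj_Creal; apply/complex_realP; exists t. Qed.

Lemma nm_eqip u v : ip u u = ip v v -> nm u = nm v.
Proof.
move=> e; apply/eqP; rewrite -(eqrXn2 (_ : 0 < 2)%N) ?nm_ge0 //.
by apply/eqP; apply: complexI; rewrite -!ipxx_real.
Qed.

Section Main.
Variables (A As B : H -> H).
Hypotheses (hA : bounded_op ip A) (hB : bounded_op ip B) (adj : is_adjoint ip A As).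

Lemma As_bound y : nm y = 1 -> nm (As y) <= opnorm ip A.
Proof.
move=> ny; set a := As y.
have e : ip a a = ip (A a) y by rewrite adj.
have h1 := CS (A a) y.
rewrite -e ger0_norm ?ipxx_ge0 // ipxx_real lecR ny mulr1 in h1.
have h2 := le_trans h1 (op_bound _ hA a).
have [a0|a0] := eqVneq (nm a) 0; first by rewrite a0 opnorm_ge0.
rewrite expr2 ler_pM2r // in h2.
by rewrite lt_def a0 nm_ge0.
Qed.

Let W := numrad ip (B \o As).

Lemma W_bound y : nm y = 1 -> complex.Re `|ip (B (As y)) y| <= W.
Proof.
move=> ny; apply: ub_le_sup; last by exists y.
exists (opnorm ip B * opnorm ip A) => r [u [nu ->]] /=.
rewrite ReN; apply: le_trans (CS _ _) _.
rewrite lecR nu mulr1; apply: le_trans (op_bound _ hB _) _.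
by rewrite ler_wpM2l ?opnorm_ge0 // As_bound.
Qed.

Lemma Re_norm_ge0 (z : R[i]) : 0 <= complex.Re `|z|.
Proof. by rewrite -ler0c RRe_real ?normr_real // normr_ge0. Qed.

Lemma main_pt x : nm x = 1 ->
  complex.Re `|ip (As (B x)) x| <= 2^-1 * (opnorm ip A * opnorm ip B + W).
Proof.
move=> nx.
have W0 : 0 <= W by apply: sup_ge0' => r [u [_ ->]]; apply: Re_norm_ge0.
have e0 : ip (As (B x)) x = ip (B x) (A x) by rewrite ipC -adj -ipC.
rewrite e0 ReN.
have [Ax0|Ax0] := eqVneq (A x) 0.
  by rewrite Ax0 ip0r normr0 ler0c mulr_ge0 ?invr_ge0 ?ler0n // addr_ge0 ?mulr_ge0 ?opnorm_ge0.
set n := nm (A x).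
have n0 : 0 < n := nm_gt0 _ Ax0.
set y := ((n^-1)%:C)%C *: A x.
have ny : nm y = 1 := nm_unit _ Ax0.
set a := As y.
have ek : ip a x = (n%:C)%C.
  rewrite ipC -adj /y ipZr conjR ipxx_real -rmorphM conjR; congr (_%:C)%C.
  by rewrite expr2 mulrA mulVf ?mul1r // gt_eqF.
have eu : nm ((2 * ip a x) *: x - a) = nm a.
  apply: nm_eqip; rewrite !(ipBl, ipBr, ipZl, ipZr) (ipC x a) ek ipxx_real nx expr1n.
  rewrite rmorphM /= rmorph_nat !conjR; ring.
case: (hB) => linB _.
have key : (2 * ip a x) * ip (B x) y = ip (B ((2 * ip a x) *: x - a)) y + ip (B a) y.
  by rewrite -ipDl -(TD _ linB) subrK (TZ _ linB) ipZl.
have e2 : (2 * ip a x) * ip (B x) y = 2 * ip (B x) (A x).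
  rewrite /y ipZr conjR ek mulrA -(mulrA 2) -rmorphM mulfV ?gt_eqF //.
  by rewrite rmorph1 mulr1.
have bound : `|2 * ip (B x) (A x)| <= ((opnorm ip A * opnorm ip B + W)%:C)%C.
  rewrite -e2 key; apply: le_trans (ler_normD _ _) _; rewrite rmorphD; apply: lerD.
    apply: le_trans (CS _ _) _; rewrite lecR ny mulr1.
    apply: le_trans (op_bound _ hB _) _; rewrite eu.
    have hh := ler_wpM2r (opnorm_ge0 B) (As_bound _ ny). by rewrite mulrC.
  by rewrite -ReN (W_bound _ ny).
rewrite normrM normr_nat in bound.
rewrite rmorphM /= fmorphV /= rmorph_nat ler_pdivlMl ?ltr0n //.
Qed.
End Main.
End IP.

Theorem mainTheorem4 (R : realType) (H : lmodType R[i]) (ip : H -> H -> R[i])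
  (A As B : H -> H) (h : R -> R) :
  is_hilbert ip ->
  bounded_op ip A -> bounded_op ip B ->
  is_adjoint ip A As ->
  nonneg_nondecr_convex_on_nonneg h ->
  h (numrad ip (As \o B)) <=
    2^-1 * h (opnorm ip A * opnorm ip B) + 2^-1 * h (numrad ip (B \o As)).
Proof.
move=> [Hip _] hA hB adj [h0 hmono hconv].
set p := opnorm ip A * opnorm ip B.
set q := numrad ip (B \o As).
have p0 : 0 <= p by rewrite mulr_ge0 ?opnorm_ge0.
have q0 : 0 <= q by apply: sup_ge0' => r [u [_ ->]]; apply: Re_norm_ge0.
have w0 : 0 <= numrad ip (As \o B).
  by apply: sup_ge0' => r [u [_ ->]]; apply: Re_norm_ge0.
have hw : numrad ip (As \o B) <= 2^-1 * (p + q).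
  apply: sup_le_ub'; first by rewrite mulr_ge0 ?addr_ge0 // invr_ge0 ler0n.
  by move=> r [u [nu ->]]; exact: (@main_pt _ _ _ Hip _ _ _ hA hB adj u nu).
apply: le_trans (hmono _ _ w0 hw) _.
have e : 1 - 2^-1 = 2^-1 :> R by field.
have := hconv p q (2^-1) p0 q0.
rewrite e -mulrDr; apply; first by rewrite invr_ge0 ler0n.
by rewrite invf_le1 ?ler1n // ltr0n.
Qed.
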